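(* Let $(\mathbf{c}^*,\mathbf{y}^*,\mathbf{E}^*,\mathbf{z}^* )$ be an optimal solution to $\mathbf{IO}$ with objective value $\mathscr{D}^*$, and let $\mathscr{D}_{opt}$, $j_{opt}$ and $\mathbf{z}_{opt}$ be the results of the algorithm described in the context. Then $\mathscr{D}^*=\mathscr{D}_{opt}$.
   Context: Forward problem $\mathbf{FO}(\mathbf{c})$: maximize $\mathbf{c}'\mathbf{x}$ subject to $\mathbf{A}\mathbf{x}\ge\mathbf{b}$ (relevant constraints, rows $\mathbf{a}_j$, $j\in\{1,\dots,m_1\}$), $\mathbf{W}\mathbf{x}\ge\mathbf{q}$ (trivial constraints); feasible region nonempty, full-dimensional, no redundant constraints. Given observations $\mathbf{x}^k$, $k\in\mathcal{K}=\{1,\dots,K\}$, the multi-observation inverse optimization model $\mathbf{IO}$ is: minimize a distance measure $\mathscr{D}(\mathbf{E},\mathbf{A})\ge0$ over $\mathbf{c},\mathbf{y},\mathbf{E},\mathbf{z}$ subject to $\mathbf{A}\mathbf{z}\ge\mathbf{b}$, $\mathbf{W}\mathbf{z}\ge\mathbf{q}$, $\mathbf{c}'\mathbf{z}=\mathbf{b}'\mathbf{y}$, $\mathbf{z}=\mathbf{x}^k-\epsilon^k$ for all $k$, $\mathbf{A}'\mathbf{y}=\mathbf{c}$, $\|\mathbf{c}\|_L=1$, $\mathbf{y}\ge\mathbf{0}$ ($\mathbf{E}$ has columns $\epsilon^k$). For each $j\in\{1,\dots,m_1\}$ define $\mathbf{BIL}_j$: minimize $\mathscr{D}(\mathbf{E},\mathbf{A})$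 subject to $\mathbf{a}_j\mathbf{z}_j=b_j$, $\mathbf{A}\mathbf{z}_j\ge\mathbf{b}$, $\mathbf{W}\mathbf{z}_j\ge\mathbf{q}$, $\mathbf{z}_j=\mathbf{x}^k-\epsilon^k_j$ for all $k$. The algorithm solves $\mathbf{BIL}_j$ for every $j$ and returns $\mathscr{D}_{opt}$ = the smallest of the optimal values $\mathscr{D}^j_{opt}$, $j_{opt}$ = an index attaining it, and $\mathbf{z}_{opt}$ = the corresponding optimal point. *)

(* Defs.v *)
From HB Require Import structures.
From mathcomp Require Import all_boot all_order all_algebra.
Set Implicit Arguments. Unset Strict Implicit. Unset Printing Implicit Defensive.
Import Order.TTheory GRing.Theory Num.Theory.
Local Open Scope ring_scope.

Section IODefs.
Variable R : realFieldType.

Definition dotv (n : nat) (c x : 'cV[R]_n) : R := (c^T *m x) 0 0.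

Definition vge (m : nat) (u v : 'cV[R]_m) : Prop := forall i, v i 0 <= u i 0.

Definition is_norm (n : nat) (nrm : 'cV[R]_n -> R) : Prop :=
  [/\ forall x, 0 <= nrm x,
      forall x, nrm x = 0 -> x = 0,
      forall (a : R) x, nrm (a *: x) = `|a| * nrm x
    & forall x y, nrm (x + y) <= nrm x + nrm y].

Variables (n m1 m2 K : nat).
Variables (A : 'M[R]_(m1, n)) (b : 'cV[R]_m1) (W : 'M[R]_(m2, n)) (q : 'cV[R]_m2).

Definition FO_feasible (x : 'cV[R]_n) : Prop := vge (A *m x) b /\ vge (W *m x) q.

Definition FO_nonempty : Prop := exists x, FO_feasible x.
Definition FO_fulldim : Prop :=
  exists x, exists e : R, 0 < e /\
    forall d : 'cV[R]_n, (forall i, `|d i 0| <= e) -> FO_feasible (x + d).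
Definition FO_no_redundant : Prop :=
  (forall j : 'I_m1, exists x,
     (forall i, i != j -> b i 0 <= (A *m x) i 0) /\ vge (W *m x) q
     /\ (A *m x) j 0 < b j 0) /\
  (forall j : 'I_m2, exists x,
     vge (A *m x) b /\ (forall i, i != j -> q i 0 <= (W *m x) i 0)
     /\ (W *m x) j 0 < q j 0).

Variables (X : 'M[R]_(n, K)) (* columns are the observations x^k *)
          (nrm : 'cV[R]_n -> R)
          (D : 'M[R]_(m1, n) -> 'M[R]_(n, K) -> R).

(* feasibility in IO; E has columns eps^k *)
Definition IO_feasible (c : 'cV[R]_n) (y : 'cV[R]_m1) (E : 'M[R]_(n, K))
    (z : 'cV[R]_n) : Prop :=
  [/\ vge (A *m z) b, vge (W *m z) q, dotv c z = dotv b y,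
      forall k : 'I_K, z = col k X - col k E
    & [/\ A^T *m y = c, nrm c = 1 & vge y 0]].

Definition IO_optimal c y E z : Prop :=
  IO_feasible c y E z /\
  forall c' y' E' z', IO_feasible c' y' E' z' -> D A E <= D A E'.

Definition BIL_feasible (j : 'I_m1) (E : 'M[R]_(n, K)) (z : 'cV[R]_n) : Prop :=
  [/\ (A *m z) j 0 = b j 0, vge (A *m z) b, vge (W *m z) q
    & forall k : 'I_K, z = col k X - col k E].

Definition BIL_optimal (j : 'I_m1) E z : Prop :=
  BIL_feasible j E z /\ forall E' z', BIL_feasible j E' z' -> D A E <= D A E'.

End IODefs.

(* Main.v *)
Require Import Defs.
From HB Require Import structures.
From mathcomp Require Import all_boot all_order all_algebra.
Import Order.TTheory GRing.Theory Num.Theory.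
Local Open Scope ring_scope.

Theorem theorem1 (R : realFieldType) (n m1 m2 K : nat)
  (A : 'M[R]_(m1, n)) (b : 'cV[R]_m1) (W : 'M[R]_(m2, n)) (q : 'cV[R]_m2)
  (X : 'M[R]_(n, K)) (nrm : 'cV[R]_n -> R)
  (D : 'M[R]_(m1, n) -> 'M[R]_(n, K) -> R) :
  FO_nonempty A b W q -> FO_fulldim A b W q -> FO_no_redundant A b W q ->
  is_norm nrm ->
  (forall E, 0 <= D A E) ->
  forall (cs : 'cV[R]_n) (ys : 'cV[R]_m1) (Es : 'M[R]_(n, K)) (zs : 'cV[R]_n)
         (Dstar : R),
  IO_optimal A b W q X nrm D cs ys Es zs -> Dstar = D A Es ->
  (* the algorithm: optimal solutions (E_j, z_j) of BIL_j with values D^j_opt *)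
  forall (Dj : 'I_m1 -> R) (Ej : 'I_m1 -> 'M[R]_(n, K)) (zj : 'I_m1 -> 'cV[R]_n),
  (forall j, BIL_optimal A b W q X D j (Ej j) (zj j) /\ Dj j = D A (Ej j)) ->
  forall (Dopt : R) (jopt : 'I_m1) (zopt : 'cV[R]_n),
  Dopt = Dj jopt -> (forall j, Dopt <= Dj j) -> zopt = zj jopt ->
  Dstar = Dopt.
Proof.
move=> _ _ [noredA _] [nrm0 nrmdef nrmZ _] _ cs ys Es zs Dstar [IOf IOopt] -> Dj Ej zj HB
  Dopt jopt zopt -> Hmin _.
have nrm00 : nrm 0 = 0 by rewrite -(scale0r 0) nrmZ normr0 mul0r.
apply/eqP; rewrite eq_le; apply/andP; split.
-
  have [[[Hj HAz HWz HX] _] ->] := HB jopt.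
  set z := zj jopt.
  set a : 'cV[R]_n := (row jopt A)^T.
  have a0 : a != 0.
    apply/eqP => a0.
    have [x [_ [_ Hx]]] := noredA jopt.
    have : (A *m x) jopt 0 = 0.
      have -> : (A *m x) jopt 0 = (row jopt (A *m x)) 0 0 by rewrite [RHS]mxE.
      by rewrite row_mul -[row jopt A]trmxK -/a a0 trmx0 mul0mx mxE.
    move=> e; move: Hx; rewrite e -Hj.
    have -> : (A *m z) jopt 0 = (row jopt (A *m z)) 0 0 by rewrite [RHS]mxE.
    by rewrite row_mul -[row jopt A]trmxK -/a a0 trmx0 mul0mx mxE ltxx.
  have sp : 0 < nrm a.
    rewrite lt_def nrm0 andbT; apply/eqP => h; move/eqP: a0; apply; exact: nrmdef.
  pose y : 'cV[R]_m1 := (nrm a)^-1 *: delta_mx jopt 0.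
  pose c : 'cV[R]_n := (nrm a)^-1 *: a.
  apply: (IOopt c y).
  split => //.
  + rewrite /dotv /c /y linearZ /= -scalemxAl -scalemxAr [LHS]mxE [RHS]mxE.
    congr (_ * _).
    rewrite /a trmxK -row_mul [LHS]mxE Hj.
    by rewrite -colE !mxE.
  + split.
    * by rewrite /y -scalemxAr -colE /c /a; congr (_ *: _); apply/matrixP => i k; rewrite !mxE.
    * by rewrite /c nrmZ ger0_norm ?invr_ge0 ?ltW // mulVf // gt_eqF.
    * by move=> i; rewrite !mxE; apply: mulr_ge0; [rewrite invr_ge0 ltW | exact: ler0n].
-
  case: IOf => HAz HWz Hdot HX [Hc Hn Hy].
  have Hsum : \sum_i ys i 0 * ((A *m zs) i 0 - b i 0) = 0.
    move: Hdot; rewrite /dotv -Hc trmx_mul trmxK -mulmxA !mxE => Hdot.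
    under eq_bigr => i _ do rewrite mulrBr.
    rewrite sumrB; apply/eqP; rewrite subr_eq0; apply/eqP.
    have E1 : \sum_i ys i 0 * (A *m zs) i 0 = \sum_j ys^T 0 j * (A *m zs) j 0.
      by apply: eq_bigr => i _; rewrite [ys^T _ _]mxE.
    rewrite E1 Hdot; apply: eq_bigr => i _; rewrite !mxE mulrC //.
  have Hy' : forall i, 0 <= ys i 0 by move=> i; have := Hy i; rewrite mxE.
  have Hterm : forall i, ys i 0 * ((A *m zs) i 0 - b i 0) = 0.
    move=> i; apply: (psumr_eq0P _ Hsum) => // k _.
    by apply: mulr_ge0 => //; rewrite subr_ge0; exact: HAz.
  case: (boolP [exists j, ys j 0 != 0]) => [/existsP [j yj]|].
  + have Hj : (A *m zs) j 0 = b j 0.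
      have /eqP := Hterm j; rewrite mulf_eq0 (negbTE yj) /= subr_eq0 => /eqP //.
    apply: (le_trans (Hmin j)).
    have [[_ Hopt] ->] := HB j.
    by apply: (Hopt Es zs); split.
  + rewrite negb_exists => /forallP Hall.
    have y0 : ys = 0 by apply/matrixP => i k; rewrite ord1 mxE; apply/eqP; have := Hall i; rewrite negbK.
    by move: Hn; rewrite -Hc y0 mulmx0 nrm00 => /eqP; rewrite eq_sym oner_eq0.
Qed.
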